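(* Let $h\ge 2$, let $k,l$ be positive integers with $k+l\le 2h-1$, and let $d_1,\dots,d_k,e_1,\dots,e_l$ be positive integers with $d_1+\dots+d_k=e_1+\dots+e_l\le h$. Then with probability $1$ the equation \[ d_1x_1+\dots+d_kx_k = e_1x_{k+1}+\dots+e_lx_{k+l} \] has only finitely many solutions $(x_1,\dots,x_{k+l})$ with $x_1,\dots,x_{k+l}$ pairwise distinct elements of $B$.
   Context: Fix an integer $h\ge 2$. Let $B$ be a random set of positive integers in which the events $\{n\in B\}$, $n=1,2,\dots$, are mutually independent and $\mathbb{P}(n\in B)=n^{-\frac{4h-3}{4h-1}}$. *)

(* Defs.v *)
From HB Require Import structures.
From mathcomp Require Import all_boot all_order all_algebra.
From mathcomp Require Import all_classical all_reals all_analysis.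
Set Implicit Arguments. Unset Strict Implicit. Unset Printing Implicit Defensive.
Import Order.TTheory GRing.Theory Num.Theory.
Local Open Scope classical_set_scope.
Local Open Scope ring_scope.

Definition mutually_independent_events {d : measure_display} {T : measurableType d}
  {R : realType} (P : probability T R) (E : nat -> set T) : Prop :=
  (forall n, measurable (E n)) /\
  forall s : seq nat, uniq s ->
    P (\bigcap_(j in [set` s]) E j) = (\prod_(j <- s) P (E j))%E.

Definition randset {T : Type} (E : nat -> set T) (w : T) : set nat :=
  [set n | (0 < n)%N /\ E n w].

Definition distinct_solutions (k l : nat) (dc : 'I_k -> nat) (ec : 'I_l -> nat)
  (S : set nat) : set ('I_(k + l) -> nat) :=
  [set x | injective x /\ (forall i, S (x i)) /\
     (\sum_(i < k) dc i * x (lshift l i) = \sum_(j < l) ec j * x (rshift k j))%N].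

(* Main.v *)
Require Import Defs.
From HB Require Import structures.
From mathcomp Require Import all_boot all_order all_algebra.
From mathcomp Require Import all_classical all_reals all_analysis.
From mathcomp Require Import zify.
Import Order.TTheory GRing.Theory Num.Theory.
Local Open Scope classical_set_scope.
Local Open Scope ring_scope.


Section Zeta.
Variable R : realType.

Lemma pair_sum (u : nat -> R) N :
  \sum_(0 <= i < N.*2) u i = \sum_(0 <= i < N) (u i.*2 + u i.*2.+1).
Proof.
elim: N => [|N IH]; first by rewrite !big_geq.
by rewrite doubleS !big_nat_recr //= IH addrA.
Qed.

Lemma ind_sum_le1 N : \sum_(0 <= i < N) ((i == 0)%N%:R : R) <= 1.
Proof.
case: N => [|N]; first by rewrite big_geq.
rewrite big_ltn //= big_nat_cond big1 ?addr0 //.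
by move=> i /andP[/andP[Hi _] _]; case: i Hi.
Qed.

Lemma zeta_bound (s : R) : 1 < s -> forall K,
  \sum_(0 <= t < K) (t%:R : R) `^ (- s) <= (1 - 2 `^ (1 - s))^-1.
Proof.
move=> s1.
set g := fun t : nat => (t%:R : R) `^ (- s).
set q := 2 `^ (1 - s) : R.
have sN0 : - s != 0 by rewrite oppr_eq0 gt_eqF // (lt_trans ltr01).
have g0 : g 0%N = 0 by rewrite /g powR0.
have g1 : g 1%N = 1 by rewrite /g powR1.
have g2 i : g i.*2 = 2 `^ (- s) * g i.
  by rewrite /g -mul2n natrM powRM.
have gpos t : (0 < t)%N -> 0 < (t%:R : R) `^ s.
  by move=> t0; rewrite powR_gt0 // ltr0n.
have gdec a b : (0 < a)%N -> (a <= b)%N -> g b <= g a.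
  move=> a0 ab; rewrite /g !powRN lef_pV2 ?posrE ?gpos ?(leq_trans a0) //.
  apply: ge0_ler_powR; rewrite ?nnegrE ?ler0n ?ler_nat //.
  exact: ltW (lt_trans ltr01 s1).
have qE : q = 2 * 2 `^ (- s).
  rewrite /q powRD; last by rewrite pnatr_eq0 implybT.
  by rewrite powRr1.
have q1 : q < 1.
  rewrite /q /powR pnatr_eq0 /= expR_lt1 pmulr_llt0 ?ln_gt0 ?ltr1n //.
  by rewrite subr_lt0.
have q0 : 0 <= q by apply: powR_ge0.
have Cpos : 0 < (1 - q)^-1 by rewrite invr_gt0 subr_gt0.
have g_ge0 t : 0 <= g t by apply: powR_ge0.
have step N : \sum_(0 <= t < N.*2) g t <= 1 + q * \sum_(0 <= t < N) g t.
  rewrite pair_sum mulr_sumr addrC.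
  apply: le_trans (_ : \sum_(0 <= i < N) (q * g i + ((i == 0)%N%:R : R)) <= _).
    apply: ler_sum => i _; case: i => [|i].
      by rewrite /= g0 g1 mulr0 add0r.
    rewrite addr0 qE -mulrA -g2 mulr_natl mulr2n lerD2l; apply: gdec => //.
  by rewrite big_split /= lerD2l ind_sum_le1.
have pow2 m : \sum_(0 <= t < 2 ^ m) g t <= (1 - q)^-1.
  elim: m => [|m IH]; first by rewrite expn0 big_nat1 g0 ltW.
  rewrite expnS mul2n; apply: le_trans (step _) _.
  apply: le_trans (_ : 1 + q * (1 - q)^-1 <= _).
    by rewrite lerD2l ler_wpM2l.
  have u : 1 - q != 0 by rewrite subr_eq0 eq_sym lt_eqF.
  by rewrite -{1}(mulfV u) -mulrDl subrK mul1r.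
move=> K; apply: le_trans (pow2 K).
rewrite (@big_cat_nat _ _ _ K 0 (2 ^ K)) //=; last exact: (ltnW (ltn_expl K (ltnSn 1))).
by rewrite lerDl sumr_ge0.
Qed.
End Zeta.

Definition solb {k l : nat} (dc : 'I_k -> nat) (ec : 'I_l -> nat)
  (x : 'I_(k + l) -> nat) : bool :=
  (\sum_(i < k) dc i * x (lshift l i) == \sum_(j < l) ec j * x (rshift k j))%N.

Lemma lr_neq k l (i : 'I_k) (j : 'I_l) : lshift l i != rshift k j.
Proof. by rewrite -val_eqE /= neq_ltn (leq_trans (ltn_ord i) (leq_addr _ _)). Qed.

Lemma sol_det k l (dc : 'I_k -> nat) (ec : 'I_l -> nat) :
  (forall i, (0 < dc i)%N) -> (forall j, (0 < ec j)%N) ->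
  forall x y (j : 'I_(k + l)), solb dc ec x -> solb dc ec y ->
  (forall i, i != j -> x i = y i) -> x j = y j.
Proof.
move=> hd he x y j /eqP sx /eqP sy exy.
case: (splitP j) => [i0 ej | j0 ej].
- have ej' : j = lshift l i0 by apply: val_inj.
  subst j.
  have Er : (\sum_(j1 < l) ec j1 * x (rshift k j1) =
             \sum_(j1 < l) ec j1 * y (rshift k j1))%N.
    apply: eq_bigr => j1 _; congr (_ * _)%N; apply: exy.
    by rewrite eq_sym; apply: lr_neq.
  move: sx sy; rewrite Er (bigD1 i0) //= [in X in _ -> X](bigD1 i0) //=.
  have -> : (\sum_(i < k | i != i0) dc i * x (lshift l i) =
             \sum_(i < k | i != i0) dc i * y (lshift l i))%N.
    apply: eq_bigr => i ni; rewrite exy //;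
    by apply: contra ni => /eqP/lshift_inj ->.
  move=> <- /eqP; rewrite eqn_add2r eqn_pmul2l //; by move/eqP.
- have ej' : j = rshift k j0 by apply: val_inj.
  subst j.
  have El : (\sum_(i < k) dc i * x (lshift l i) =
             \sum_(i < k) dc i * y (lshift l i))%N.
    apply: eq_bigr => i _; congr (_ * _)%N; apply: exy.
    by apply: lr_neq.
  move: sx sy; rewrite El (bigD1 j0) //= [in X in _ -> X](bigD1 j0) //=.
  have -> : (\sum_(i < l | i != j0) ec i * x (rshift k i) =
             \sum_(i < l | i != j0) ec i * y (rshift k i))%N.
    apply: eq_bigr => i ni; rewrite exy //;
    by apply: contra ni => /eqP/rshift_inj ->.
  move=> -> /eqP; rewrite eqn_add2r eqn_pmul2l //; by move/eqP.
Qed.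

Lemma sum_inj_le (R : realType) (I J : finType) (P : pred I) (h : I -> J)
  (G : J -> R) : {in P &, injective h} -> (forall j, 0 <= G j) ->
  \sum_(i | P i) G (h i) <= \sum_j G j.
Proof.
move=> hinj G0.
have := big_imset G hinj => /= E.
rewrite -E big_mkcond /=; apply: ler_sum => j _.
by case: ifP.
Qed.

Lemma box_bound (R : realType) k l (dc : 'I_k -> nat) (ec : 'I_l -> nat)
  (f : nat -> R) (Z : R) :
  (forall i, (0 < dc i)%N) -> (forall j, (0 < ec j)%N) ->
  (0 < k + l)%N ->
  (forall t, 0 <= f t) ->
  (forall a b, (0 < a)%N -> (a <= b)%N -> f b <= f a) ->
  1 <= Z ->
  (forall K, \sum_(0 <= t < K) f t ^+ (k + l) <= Z) ->
  forall K, \sum_(y : {ffun 'I_(k + l) -> 'I_K.+1} |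
       [forall i, (0 < y i)%N] && solb dc ec (fun i => val (y i)))
     \prod_i f (y i) ^+ (k + l).-1 <= (k + l)%:R * Z ^+ (k + l).
Proof.
move=> hd he n0 f0 fdec Z1 fZ K.
set good := fun y : {ffun 'I_(k + l) -> 'I_K.+1} =>
  [forall i, (0 < y i)%N] && solb dc ec (fun i => val (y i)).
set F := fun (j i : 'I_(k + l)) (t : 'I_K.+1) =>
  if i == j then ((t == ord0) %:R : R) else f t ^+ (k + l).
set xp := fun (j : 'I_(k + l)) (y : {ffun 'I_(k + l) -> 'I_K.+1}) =>
  [ffun i => if i == j then ord0 else y i].
set T := fun j y => \prod_i F j i (xp j y i).
have F0 j i t : 0 <= F j i t by rewrite /F; case: ifP => _; rewrite ?ler0n ?exprn_ge0.
have T0 j y : 0 <= T j y by apply: prodr_ge0 => i _.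
have i0 : 'I_(k + l) := Ordinal n0.
have key y : good y -> \prod_i f (y i) ^+ (k + l).-1 <= \sum_j T j y.
  move=> /andP[/forallP ypos _].
  have [j0 _ Hj0] := @arg_maxnP _ i0 xpredT (fun i => val (y i)) isT.
  apply: le_trans (_ : T j0 y <= _); last first.
    by rewrite (bigD1 j0) //= lerDl sumr_ge0.
  rewrite /T (bigD1 j0) //= [X in _ <= X](bigD1 j0) //=.
  rewrite /F /xp ffunE !eqxx mul1r.
  have -> : \prod_(i | i != j0) (if i == j0 then ((([ffun i0 => if i0 == j0 then ord0 else y i0] i) == ord0)%:R : R)
              else f ([ffun i0 => if i0 == j0 then ord0 else y i0] i) ^+ (k + l)) =
            \prod_(i | i != j0) (f (y i) * f (y i) ^+ (k + l).-1).
    apply: eq_bigr => i /negbTE ni; rewrite ni ffunE ni -exprS prednK //.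
  rewrite big_split /=; apply: ler_pM.
  - exact: exprn_ge0.
  - by apply: prodr_ge0 => i _; apply: exprn_ge0.
  - have -> : f (y j0) ^+ (k + l).-1 = \prod_(i | i != j0) f (y j0).
      by rewrite prodr_const cardC1 card_ord.
    apply: ler_prod => i _; rewrite f0 /=; apply: fdec => //; exact: Hj0.
  - by [].
apply: le_trans (_ : \sum_(y | good y) \sum_j T j y <= _).
  by apply: ler_sum => y gy; apply: key.
rewrite exchange_big /=.
apply: le_trans (_ : \sum_(j < k + l) Z ^+ (k + l) <= _); last first.
  by rewrite sumr_const card_ord mulr_natl.
apply: ler_sum => j _.
apply: le_trans (_ : \sum_(y : {ffun 'I_(k + l) -> 'I_K.+1}) \prod_i F j i (y i) <= _).
  rewrite /T.
  apply: (@sum_inj_le R _ _ good (xp j) (fun y => \prod_i F j i (y i))); last first.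
    by move=> y; apply: prodr_ge0 => i _.
  move=> y1 y2 g1 g2 /ffunP E.
  have E' i : i != j -> y1 i = y2 i.
    by move=> ni; have := E i; rewrite !ffunE (negbTE ni).
  apply/ffunP => i; case: (eqVneq i j) => [->|ni]; last exact: E'.
  apply: val_inj.
  move: g1 g2 => /andP[_ s1] /andP[_ s2].
  have H := @sol_det k l dc ec hd he _ _ j s1 s2.
  apply: H => i1 ni1 /=; by rewrite (E' i1 ni1).
rewrite -bigA_distr_bigA /=.
have -> : Z ^+ (k + l) = \prod_(i < k + l) Z by rewrite prodr_const card_ord.
apply: ler_prod => i _; rewrite sumr_ge0 //=.
rewrite /F; case: (eqVneq i j) => [_|_].
  rewrite (bigD1 ord0) //= big1 ?addr0 //.
  by move=> t /negbTE ->.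
apply: le_trans (fZ K.+1).
by rewrite big_mkord.
Qed.

Definition goodU {k l : nat} (dc : 'I_k -> nat) (ec : 'I_l -> nat)
  (x : {ffun 'I_(k + l) -> nat}) : bool :=
  [&& injectiveb x, [forall i, (0 < x i)%N] & solb dc ec (fun i => x i)].

Definition wgt {R : realType} {k l : nat} (dc : 'I_k -> nat) (ec : 'I_l -> nat)
  (f : nat -> R) (m : nat) : R :=
  match @pickle_inv {ffun 'I_(k + l) -> nat} m with
  | Some x => if goodU dc ec x then \prod_i f (x i) ^+ (k + l).-1 else 0
  | None => 0
  end.

Lemma pickle_sum_bound (R : realType) k l (dc : 'I_k -> nat) (ec : 'I_l -> nat)
  (f : nat -> R) (B : R) :
  (forall t, 0 <= f t) ->
  (forall K, \sum_(y : {ffun 'I_(k + l) -> 'I_K.+1} |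
       [forall i, (0 < y i)%N] && solb dc ec (fun i => val (y i)))
     \prod_i f (y i) ^+ (k + l).-1 <= B) ->
  forall N, \sum_(0 <= m < N) wgt dc ec f m <= B.
Proof.
move=> f0 hB N.
set mx := fun m : nat => match @pickle_inv {ffun 'I_(k + l) -> nat} m with
  | Some x => (\max_i x i)%N | None => 0%N end.
set K := (\max_(m < N) mx m)%N.
have bnd (m : 'I_N) x i : @pickle_inv {ffun 'I_(k + l) -> nat} m = Some x ->
    (x i < K.+1)%N.
  move=> e; rewrite ltnS; apply: leq_trans (leq_bigmax m).
  by rewrite /mx e; apply: (leq_bigmax (F := fun i => x i)).
set hm := fun m : 'I_N => match @pickle_inv {ffun 'I_(k + l) -> nat} m with
  | Some x => [ffun i => (inord (x i) : 'I_K.+1)]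
  | None => [ffun _ => ord0] end.
set gP := fun m : 'I_N => match @pickle_inv {ffun 'I_(k + l) -> nat} m with
  | Some x => goodU dc ec x | None => false end.
set goodY := fun y : {ffun 'I_(k + l) -> 'I_K.+1} =>
  [forall i, (0 < y i)%N] && solb dc ec (fun i => val (y i)).
set G := fun y : {ffun 'I_(k + l) -> 'I_K.+1} =>
  if goodY y then \prod_i f (y i) ^+ (k + l).-1 else 0.
apply: le_trans (hB K).
rewrite big_mkord.
have -> : \sum_(m < N) wgt dc ec f m = \sum_(m < N | gP m) G (hm m).
  rewrite [RHS]big_mkcond /=.
  apply: eq_bigr => m _.
  rewrite /wgt /gP /G /hm.
  case e: (pickle_inv _) => [x|] //.
  case gx: (goodU dc ec x) => //.
  have vE : (fun i => val ([ffun i => (inord (x i) : 'I_K.+1)] i)) = (fun i => x i).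
    by apply: funext => i; rewrite ffunE /= inordK // (bnd m).
  move: (gx) => /and3P[_ /forallP xpos xs].
  rewrite /goodY vE xs andbT.
  have -> : [forall i, (0 < [ffun i => (inord (x i) : 'I_K.+1)] i)%N].
    by apply/forallP => i; rewrite ffunE inordK ?xpos // (bnd m).

  by apply: eq_bigr => i _; rewrite ffunE inordK // (bnd m).
apply: le_trans (_ : \sum_y G y <= _).
  apply: sum_inj_le; last first.
    by move=> y; rewrite /G; case: ifP => _ //; apply: prodr_ge0 => i _; apply: exprn_ge0.
  move=> m1 m2; rewrite /gP /hm !unfold_in /=.
  case e1: (@pickle_inv {ffun 'I_(k + l) -> nat} m1) => [x1|]; last by move=> /=; discriminate.
  case e2: (@pickle_inv {ffun 'I_(k + l) -> nat} m2) => [x2|]; last by move=> /= _; discriminate.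
  move=> _ _.
  move=> /ffunP E.
  have x12 : x1 = x2.
    apply/ffunP => i; have := E i; rewrite !ffunE => /(congr1 val).
    by rewrite /= !inordK // ?(bnd m1 _ i e1) ?(bnd m2 _ i e2).
  apply: val_inj.
  have := @pickle_invK {ffun 'I_(k + l) -> nat} m1; have := @pickle_invK {ffun 'I_(k + l) -> nat} m2.
  by rewrite e1 e2 /= x12 => -> ->.
rewrite [leRHS]big_mkcond /=.
by apply: ler_sum => y _; rewrite /G.
Qed.


Lemma gamma_gt1 (R : realType) h n : (2 <= h)%N -> (2 <= n)%N -> (n <= 2 * h - 1)%N ->
  1 < ((4 * h - 3)%:R / (4 * h - 1)%:R / (n.-1)%:R) * (n%:R : R).
Proof.
move=> h2 n2 nh.
have b0 : ((4 * h - 1)%:R != 0 :> R) by rewrite pnatr_eq0; lia.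
have m0 : ((n.-1)%:R != 0 :> R) by rewrite pnatr_eq0; lia.
rewrite mulrAC ltr_pdivlMr ?lt0r ?m0 ?ler0n // mul1r.
rewrite mulrAC ltr_pdivlMr ?lt0r ?b0 ?ler0n //.
rewrite -!natrM ltr_nat; nia.
Qed.

Theorem lemma8 (R : realType) (d : measure_display) (T : measurableType d)
  (P : probability T R) (h : nat) (E : nat -> set T) :
  (2 <= h)%N ->
  mutually_independent_events P E ->
  (forall n : nat, (0 < n)%N ->
     P (E n) = ((n%:R : R) `^ (- ((4 * h - 3)%:R / (4 * h - 1)%:R)))%:E) ->
  forall (k l : nat) (dc : 'I_k -> nat) (ec : 'I_l -> nat),
  (0 < k)%N -> (0 < l)%N -> (k + l <= 2 * h - 1)%N ->
  (forall i, (0 < dc i)%N) -> (forall j, (0 < ec j)%N) ->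
  (\sum_(i < k) dc i)%N = (\sum_(j < l) ec j)%N ->
  (\sum_(i < k) dc i <= h)%N ->
  {ae P, forall w, finite_set (distinct_solutions dc ec (randset E w))}.
Proof.
move=> h2 [mE indep] hP k l dc ec k0 l0 kl hd he _ _.
have n2 : (2 <= k + l)%N by lia.
have n0 : (0 < k + l)%N by lia.
set α : R := (4 * h - 3)%:R / (4 * h - 1)%:R.
set β : R := α / ((k + l).-1)%:R.
have m0 : (((k + l).-1)%:R != 0 :> R) by rewrite pnatr_eq0; lia.
have alpha_eq : β * ((k + l).-1)%:R = α by rewrite /β divfK.
have β0 : 0 <= β.
  by rewrite /β /α divr_ge0 ?divr_ge0 ?ler0n.
set f := fun t : nat => (t%:R : R) `^ (- β).
have f0 t : 0 <= f t by apply: powR_ge0.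
have fpow t m : f t ^+ m = (t%:R : R) `^ (- (β * m%:R)).
  by rewrite /f -powR_mulrn ?powR_ge0 // -powRrM mulNr.
have fdec a b : (0 < a)%N -> (a <= b)%N -> f b <= f a.
  move=> a0 ab; rewrite /f !powRN lef_pV2 ?posrE ?powR_gt0 ?ltr0n ?(leq_trans a0) //.
  by apply: ge0_ler_powR; rewrite ?nnegrE ?ler0n ?ler_nat.
have s1 : 1 < β * (k + l)%:R by apply: gamma_gt1.
set C := (1 - 2 `^ (1 - β * (k + l)%:R))^-1.
have C0 : 0 <= C by have := @zeta_bound R _ s1 0; rewrite big_geq.
set Z := 1 + C.
have fZ K : \sum_(0 <= t < K) f t ^+ (k + l) <= Z.
  under eq_bigr => t _ do rewrite fpow.
  by apply: le_trans (@zeta_bound R _ s1 K) _; rewrite lerDr.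
have Z1 : 1 <= Z by rewrite lerDl.
have box := @box_bound R k l dc ec f Z hd he n0 f0 fdec Z1 fZ.
have psb := @pickle_sum_bound R k l dc ec f _ f0 box.
set F := fun m : nat => match @pickle_inv {ffun 'I_(k + l) -> nat} m with
  | Some x => if goodU dc ec x
              then \bigcap_(j in [set` map x (enum 'I_(k + l))]) E j else set0
  | None => set0 end.
have mF m : measurable (F m).
  rewrite /F; case: (pickle_inv m) => [x|]; last exact: measurable0.
  case: ifP => _; last exact: measurable0.
  apply: bigcap_measurable => [|j _]; last exact: mE.
  by exists (x (Ordinal n0)); rewrite /= map_f ?mem_enum.
have PF m : P (F m) = (wgt dc ec f m)%:E.
  rewrite /F /wgt; case: (pickle_inv m) => [x|]; last by rewrite measure0.
  case gx: (goodU dc ec x); last by rewrite measure0.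
  move: (gx) => /and3P[/injectiveP xinj /forallP xpos _].
  rewrite indep; last by rewrite map_inj_uniq ?enum_uniq.
  rewrite big_map (eq_bigr (fun j => (f (x j) ^+ (k + l).-1)%:E)); last first.
    by move=> j _; rewrite hP ?xpos // fpow alpha_eq.
  by rewrite prodEFin enumT.
have sumF : (\sum_(0 <= m <oo) P (F m) <= ((k + l)%:R * Z ^+ (k + l))%:E)%E.
  apply: lime_le; first exact: is_cvg_nneseries.
  apply: nearW => N.
  rewrite (eq_bigr (fun m => (wgt dc ec f m)%:E)); last by move=> m _; apply: PF.
  by rewrite sumEFin lee_fin; apply: psb.
have null : P (lim_sup_set F) = 0%E.
  by apply: lim_sup_set_cvg0 => //; apply: le_lt_trans sumF _; apply: ltry.
exists (lim_sup_set F); split => //.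
  rewrite /lim_sup_set; apply: bigcapT_measurable => i.
  by apply: bigcup_measurable => j _; exact: mF.
move=> w /= nfin; apply: contrapT => nA; apply: nfin.
have [N HN] : exists N, forall j, (N <= j)%N -> ~ F j w.
  apply: contrapT => H; apply: nA => i _.
  apply: contrapT => H2; apply: H; exists i => j ij Fj; apply: H2; by exists j.
set dec := fun m : nat => match @pickle_inv {ffun 'I_(k + l) -> nat} m with
  | Some x => (fun i => x i) | None => (fun _ => 0%N) end.
apply: (sub_finite_set _ (finite_image dec (finite_II N))).
move=> x [xinj [xB xeq]].
set fx : {ffun 'I_(k + l) -> nat} := [ffun i => x i].
have fxE : (fun i => fx i) = x by apply: funext => i; rewrite ffunE.
have gx : goodU dc ec fx.
  apply/and3P; split.
  - by apply/injectiveP => i1 i2; rewrite !ffunE; exact: xinj.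
  - by apply/forallP => i; rewrite ffunE; exact: (xB i).1.
  - by rewrite fxE; apply/eqP.
exists (pickle fx).
  rewrite /= ltnNge; apply/negP => Nle; apply: (HN _ Nle).
  rewrite /F pickleK_inv gx => j /= /mapP [i _ ->].
  by rewrite ffunE; exact: (xB i).2.
by rewrite /dec pickleK_inv.
Qed.
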